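(* Let $\mathcal{X}$ be a nonempty finite set, let $k$ be a strong kernel on $\mathcal{X}$, and let $(T,w)$ be a hierarchy on $\mathcal{X}$ inducing $k$. Let $n\in\mathbb{N}$ and let $X,Y\subseteq\mathcal{X}$ with $|X|=|Y|=n$. Then $$K^k_{\mathfrak{B}}(X,Y)=\sum_{v\in V(T)}\omega(v)\cdot\min\{|X_v|,|Y_v|\}=K_{\sqcap}\big(H^k(X),H^k(Y)\big).$$
   Context: A rooted tree is a finite tree $T$ with a distinguished root vertex $r$. For a vertex $v$, its parent $p(v)$ is the vertex following $v$ on the unique path from $v$ to $r$, with the convention $p(r)=r$. The ancestors of $v$ are the vertices on the path from $v$ to $r$ (including $v$ and $r$); the depth of $v$ is the number of edges on this path. The lowest common ancestor $\mathrm{LCA}(u,v)$ is the unique vertex of maximum depth that is an ancestor of both $u$ and $v$. A hierarchy on a set $\mathcal{X}$ is a pair $(T,w)$ where $T$ is a rooted tree whose set of leaves is exactly $\mathcal{X}$, and $w:V(T)\to\mathbb{R}_{\ge 0}$ satisfies $w(v)\ge w(p(v))$ for all $v\in V(T)$. The kernel induced by $(T,w)$ is $k(x,y)=w(\mathrm{LCA}(x,y))$ for $x,y\in\mathcal{X}$. A strong kernel on a set $\mathcal{X}$ is a symmetric function $k:\mathcal{X}\times\mathcal{X}\to\mathbb{R}_{\ge 0}$ such that $k(x,y)\ge\min\{k(x,z),k(z,y)\}$ for all $x,y,z\in\mathcal{X}$. Given a hierarchy $(T,w)$ with root $r$, the additive weight $\omega:V(T)\to\mathbb{R}_{\ge0}$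 is $\omega(v)=w(v)-w(p(v))$ for $v\ne r$ and $\omega(r)=w(r)$. For $X\subseteq\mathcal{X}$ and $v\in V(T)$, $X_v$ denotes the set of elements of $X$ that are leaves of the subtree of $T$ rooted at $v$ (i.e. elements of $X$ having $v$ as an ancestor). The histogram of $X$ is the vector $H^k(X)\in\mathbb{R}^{V(T)}$ with $[H^k(X)]_v=\omega(v)\cdot|X_v|$. The histogram intersection kernel on $\mathbb{R}^t$ is $K_\sqcap(g,h)=\sum_{i=1}^t\min\{g_i,h_i\}$. For $X,Y$ of equal cardinality, $\mathfrak{B}(X,Y)$ is the set of all bijections between $X$ and $Y$ (viewed as sets of pairs $(x,y)$), and the optimal assignment kernel is $K^k_{\mathfrak{B}}(X,Y)=\max_{B\in\mathfrak{B}(X,Y)}\sum_{(x,y)\in B}k(x,y)$. *)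

(* Defs.v *)
From HB Require Import structures.
From mathcomp Require Import all_boot all_order all_algebra.
Set Implicit Arguments. Unset Strict Implicit. Unset Printing Implicit Defensive.
Import Order.TTheory GRing.Theory Num.Theory.
Local Open Scope ring_scope.

Section Defs.
Variable V : finType.
Variable p : V -> V. (* parent function *)
Variable r : V.

Definition rooted_tree : Prop :=
  p r = r /\ forall v : V, exists m : nat, iter m p v = r.

Definition ancestor (u v : V) : bool :=
  [exists i : 'I_#|V|.+1, iter i p v == u].

(* depth = number of edges on the path from v to r
   = (number of vertices on that path) - 1 *)
Definition depth (v : V) : nat := #|[set u | ancestor u v]|.-1.

Definition is_lca (u a b : V) : Prop :=
  [/\ ancestor u a, ancestor u b &
      forall c, ancestor c a -> ancestor c b -> (depth c <= depth u)%N].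

Definition leaf (v : V) : bool := [forall u, (p u == v) ==> (u == v)].

Variable R : realFieldType.
Variable w : V -> R.

Definition weight_ok : Prop := forall v, 0 <= w v /\ w (p v) <= w v.

Definition omega (v : V) : R := if v == r then w r else w v - w (p v).

Variable Xt : finType.
Variable f : Xt -> V. (* identification of the ground set with the leaves *)

Definition leaves_are : Prop :=
  injective f /\ forall v : V, leaf v <-> exists x : Xt, f x = v.

Definition induces (k : Xt -> Xt -> R) : Prop :=
  forall x y u, is_lca u (f x) (f y) -> k x y = w u.

Definition subX (X : {set Xt}) (v : V) : {set Xt} :=
  [set x in X | ancestor v (f x)].

Definition histogram (X : {set Xt}) : {ffun V -> R} :=
  [ffun v => omega v * (#|subX X v|)%:R].

End Defs.

Definition Kcap (I : finType) (R : realFieldType) (g h : {ffun I -> R}) : R :=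
  \sum_(i : I) Num.min (g i) (h i).

Definition strong_kernel (Xt : finType) (R : realFieldType)
    (k : Xt -> Xt -> R) : Prop :=
  (forall x y, k x y = k y x) /\ (forall x y, 0 <= k x y) /\
  (forall x y z, Num.min (k x z) (k z y) <= k x y).

(* B is a bijection between X and Y, viewed as a set of pairs *)
Definition is_bij (Xt : finType) (X Y : {set Xt}) (B : {set Xt * Xt}) : bool :=
  [&& B \subset setX X Y,
      [forall x in X, #|[set b in B | b.1 == x]| == 1%N] &
      [forall y in Y, #|[set b in B | b.2 == y]| == 1%N]].

(* optimal assignment kernel; the max is taken with initial value 0,
   harmless since kernel values are nonnegative and the bijection set is
   nonempty when |X| = |Y| *)
Definition KB (Xt : finType) (R : realFieldType) (k : Xt -> Xt -> R)
    (X Y : {set Xt}) : R :=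
  \big[Num.max/0]_(B : {set Xt * Xt} | is_bij X Y B) \sum_(b in B) k b.1 b.2.

(* Main.v *)
Require Import Defs.
From HB Require Import structures.
From mathcomp Require Import all_boot all_order all_algebra.
From mathcomp Require Import zify.
Import Order.TTheory GRing.Theory Num.Theory.
Local Open Scope ring_scope.

Section Tree.
Variables (V : finType) (p : V -> V) (r : V).
Hypothesis htree : rooted_tree p r.

Lemma iter_small (v : V) i : exists j : 'I_#|V|.+1, iter j p v = iter i p v.
Proof.
elim: i {-2}i (leqnn i) => [|m IH] i hi.
  by move: hi; rewrite leqn0 => /eqP ->; exists ord0.
case: (ltnP i #|V|.+1) => hiV; first by exists (Ordinal hiV).
pose g (j : 'I_#|V|.+1) := iter j p v.
have [/existsP [a /existsP [b /andP [hab /eqP hg]]] | hn] :=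
  boolP [exists a : 'I_#|V|.+1, [exists b : 'I_#|V|.+1, (a < b)%N && (g a == g b)]].
- have hb : (b <= i)%N by apply: ltnW (leq_trans (ltn_ord b) hiV).
  have eq : iter i p v = iter (i - b + a) p v.
    by rewrite -{1}(subnK hb) !iterD -/(g b) -hg.
  have [j hj] : exists j : 'I_#|V|.+1, iter j p v = iter (i - b + a) p v.
    apply: IH; move: hab hi hb; clear; move: (nat_of_ord a) (nat_of_ord b) => a0 b0; lia.
  by exists j; rewrite hj eq.
- exfalso.
  have inj : injective g.
    move=> a b hab; apply: val_inj => /=.
    case: (ltngtP a b) => // h; exfalso; apply: (negP hn).
      by apply/existsP; exists a; apply/existsP; exists b; rewrite h hab eqxx.
    by apply/existsP; exists b; apply/existsP; exists a; rewrite h hab eqxx.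
  have := @leq_card _ _ g inj; rewrite card_ord; lia.
Qed.

Lemma ancP u v : reflect (exists i, iter i p v = u) (ancestor p u v).
Proof.
apply: (iffP existsP) => [[i /eqP h]|[i h]]; first by exists i.
have [j hj] := iter_small v i; exists j; by rewrite hj h.
Qed.

Lemma anc_refl v : ancestor p v v.
Proof. by apply/ancP; exists 0%N. Qed.

Lemma anc_trans {a b c} : ancestor p a b -> ancestor p b c -> ancestor p a c.
Proof.
move=> /ancP[i hi] /ancP[j hj]; apply/ancP; exists (i + j)%N.
by rewrite iterD hj hi.
Qed.

Lemma anc_chain {a b c} :
  ancestor p a c -> ancestor p b c -> ancestor p a b || ancestor p b a.
Proof.
move=> /ancP[i hi] /ancP[j hj]; case: (leqP i j) => h; apply/orP.
  by right; apply/ancP; exists (j - i)%N; rewrite -hi -hj -iterD subnK.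
by left; apply/ancP; exists (i - j)%N; rewrite -hi -hj -iterD subnK // ltnW.
Qed.

Lemma iter_r m : iter m p r = r.
Proof. by apply: iter_fix; case: htree. Qed.

Lemma anc_r v : ancestor p r v.
Proof. by case: htree => _ /(_ v) [m hm]; apply/ancP; exists m. Qed.

Lemma anc_antisym {a b} : ancestor p a b -> ancestor p b a -> a = b.
Proof.
move=> /ancP[i hi] /ancP[j hj].
case: htree => _ /(_ b) [m hm].
have per : forall t, iter (t * (j + i)) p b = b.
  elim => [|t IH] //; by rewrite mulSn iterD IH iterD hi hj.
case E: (j + i)%N => [|s].
  have i0 : i = 0%N by lia.
  by move: hi; rewrite i0 /= => ->.
have hb : b = r.
  rewrite -(per m) -(subnK (_ : (m <= m * (j + i))%N)) ?iterD ?hm ?iter_r //.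
  by rewrite E leq_pmulr.
by rewrite -hi hb iter_r.
Qed.

Lemma anc_parent v u : ancestor p u v = (u == v) || ancestor p u (p v).
Proof.
apply/ancP/orP => [[[|i] hi]|[/eqP->|/ancP[i hi]]].
- by left; apply/eqP; rewrite -hi.
- by right; apply/ancP; exists i; rewrite -iterSr.
- by exists 0%N.
- by exists i.+1; rewrite iterSr.
Qed.

Lemma anc_of_r v : ancestor p v r = (v == r).
Proof.
apply/ancP/eqP => [[i <-]|->]; first by rewrite iter_r.
by exists 0%N.
Qed.

Variable R : realFieldType.
Variable w : V -> R.

Lemma w_tele u : w u = \sum_(v | ancestor p v u) omega p r w v.
Proof.
have base : w r = \sum_(v | ancestor p v r) omega p r w v.
  rewrite (eq_bigl (fun v => v == r)) => [|v]; last by rewrite anc_of_r.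
  by rewrite big_pred1_eq /omega eqxx.
case: htree => hr /(_ u) [m hm].
elim: m u hm => [|m IH] u hm; first by rewrite /= in hm; rewrite hm.
case: (eqVneq u r) => [-> //| hur].
have hpu : ~~ ancestor p u (p u).
  apply/negP => hu.
  have e : p u = u.
    by apply: anc_antisym => //; rewrite anc_parent anc_refl orbT.
  by move: hm; rewrite iter_fix // => hh; move: hur; rewrite hh eqxx.
rewrite (eq_bigl (fun v => (v == u) || ancestor p v (p u))) => [|v];
  last by rewrite anc_parent.
rewrite (bigD1 u) ?eqxx //=.
rewrite (eq_bigl (fun v => ancestor p v (p u))) => [|v].
  rewrite -IH; last by rewrite -iterSr.
  by rewrite /omega (negbTE hur) subrK.
case: (eqVneq v u) => [->|] /=; first by rewrite (negbTE hpu).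
by rewrite andbT.
Qed.

Lemma lca_exists a b : exists u, is_lca p u a b /\
  forall c, ancestor p c a && ancestor p c b = ancestor p c u.
Proof.
pose S := [set c | ancestor p c a && ancestor p c b].
have rS : r \in S by rewrite /S inE !anc_r.
case: (arg_maxnP (fun c => depth p c) rS) => u uS0 umax0.
have uS : u \in S := uS0.
have umax : forall c, c \in S -> (depth p c <= depth p u)%N := umax0.
move: uS; rewrite /S inE => /andP [ua ub].
have lca : is_lca p u a b.
  by split => // c ca cb; apply: umax; rewrite /S inE ca cb.
exists u; split => // c.
apply/idP/idP => [/andP [ca cb] | cu]; last by rewrite (anc_trans cu ua) (anc_trans cu ub).
case/orP: (anc_chain ca ua) => // uc.
case: (eqVneq c u) => [-> |hcu]; first exact: anc_refl.
exfalso.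
have hd : (depth p c <= depth p u)%N by apply: umax; rewrite /S inE ca cb.
have sub : [set x | ancestor p x u] \proper [set x | ancestor p x c].
  apply/properP; split.
    by apply/subsetP => x; rewrite !inE => xu; apply: anc_trans xu uc.
  exists c; rewrite !inE ?anc_refl //.
  by apply/negP => cu; rewrite (anc_antisym cu uc) eqxx in hcu.
have := proper_card sub.
have h1 : (0 < #|[set x | ancestor p x u]|)%N.
  by apply/card_gt0P; exists u; rewrite inE anc_refl.
move: hd; rewrite /depth => hd h2.
lia.
Qed.


Hypothesis hw : weight_ok p w.

Lemma omega_ge0 v : 0 <= omega p r w v.
Proof.
rewrite /omega; case: eqP => _; first exact: (hw r).1.
by rewrite subr_ge0; exact: (hw v).2.
Qed.

Variables (Xt : finType) (f : Xt -> V) (k : Xt -> Xt -> R).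
Hypothesis hind : induces p w f k.

Definition C (x y : Xt) := [set v | ancestor p v (f x) && ancestor p v (f y)].
Definition F (X Y : {set Xt}) :=
  \sum_(v : V) omega p r w v * (minn #|subX p f X v| #|subX p f Y v|)%:R.

Lemma k_C x y : k x y = \sum_(v in C x y) omega p r w v.
Proof.
have [u [hu hc]] := lca_exists (f x) (f y).
rewrite (hind _ _ _ hu) w_tele; apply: eq_bigl => v.
by rewrite /C inE hc.
Qed.

Lemma bij_inj1 {X Y B} : is_bij X Y B -> {in B &, injective (fun b : Xt * Xt => b.1)}.
Proof.
case/and3P => hs /forallP h1 _ b1 b2 hb1 hb2 e.
have hx : b1.1 \in X by move/subsetP: hs => /(_ _ hb1); rewrite inE => /andP [].
have /cards1P [z hz] := implyP (h1 b1.1) hx.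
have : b1 \in [set b in B | b.1 == b1.1] by rewrite inE hb1 eqxx.
have : b2 \in [set b in B | b.1 == b1.1] by rewrite inE hb2 e eqxx.
by rewrite hz !inE => /eqP -> /eqP ->.
Qed.

Lemma bij_inj2 {X Y B} : is_bij X Y B -> {in B &, injective (fun b : Xt * Xt => b.2)}.
Proof.
case/and3P => hs _ /forallP h1 b1 b2 hb1 hb2 e.
have hx : b1.2 \in Y by move/subsetP: hs => /(_ _ hb1); rewrite inE => /andP [].
have /cards1P [z hz] := implyP (h1 b1.2) hx.
have : b1 \in [set b in B | b.2 == b1.2] by rewrite inE hb1 eqxx.
have : b2 \in [set b in B | b.2 == b1.2] by rewrite inE hb2 e eqxx.
by rewrite hz !inE => /eqP -> /eqP ->.
Qed.

Lemma upper X Y B : is_bij X Y B -> \sum_(b in B) k b.1 b.2 <= F X Y.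
Proof.
move=> hB.
rewrite (eq_bigr (fun b => \sum_(v in C b.1 b.2) omega p r w v)) => [|b _]; last exact: k_C.
under eq_bigr do rewrite big_mkcond /=.
rewrite exchange_big /F; apply: ler_sum => v _.
rewrite -big_mkcondr /=.
rewrite (eq_bigl (fun b => b \in [set b in B | v \in C b.1 b.2])) => [|b]; last by rewrite inE.
rewrite sumr_const -(mulr_natr (omega p r w v)); apply: ler_wpM2l; first exact: omega_ge0.
rewrite ler_nat leq_min.
case/and3P: (hB) => hs _ _.
apply/andP; split.
  rewrite -(card_in_imset (f := fun b : Xt * Xt => b.1)); last first.
    move=> b1 b2; rewrite !inE => /andP [h1 _] /andP [h2 _]. exact: (bij_inj1 hB b1 b2 h1 h2).
  apply: subset_leq_card; apply/subsetP => x /imsetP [b]; rewrite inE => /andP [hb hv] ->.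
  rewrite /subX inE; move/subsetP: hs => /(_ _ hb); rewrite inE => /andP [-> _].
  by move: hv; rewrite /C inE => /andP [].
rewrite -(card_in_imset (f := fun b : Xt * Xt => b.2)); last first.
  by move=> b1 b2; rewrite !inE => /andP [h1 _] /andP [h2 _]; exact: (bij_inj2 hB b1 b2 h1 h2).
apply: subset_leq_card; apply/subsetP => x /imsetP [b]; rewrite inE => /andP [hb hv] ->.
rewrite /subX inE; move/subsetP: hs => /(_ _ hb); rewrite inE => /andP [_ ->].
by move: hv; rewrite /C inE => /andP [].
Qed.

Lemma cross {a b b' v} : ancestor p v a -> ~~ ancestor p v b -> ancestor p v b' ->
  (#|[set c | ancestor p c a && ancestor p c b]| <
   #|[set c | ancestor p c a && ancestor p c b']|)%N.
Proof.
move=> va vb vb'; apply: proper_card; apply/properP; split.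
  apply/subsetP => c; rewrite !inE => /andP [ca cb]; rewrite ca /=.
  case/orP: (anc_chain ca va) => [cv|vc]; first exact: anc_trans cv vb'.
  by rewrite (anc_trans vc cb) in vb.
by exists v; rewrite !inE va ?vb' ?(negbTE vb).
Qed.

Lemma subX_D1 (X : {set Xt}) x v : x \in X ->
  #|subX p f X v| = (ancestor p v (f x) + #|subX p f (X :\ x) v|)%N.
Proof.
move=> hx; rewrite (cardsD1 x (subX p f X v)); congr (_ + _)%N.
  by rewrite /subX inE hx.
by apply: eq_card => y; rewrite /subX !inE andbA.
Qed.

Lemma subX0 v : subX p f set0 v = set0.
Proof. by apply/setP => x; rewrite /subX !inE. Qed.

Lemma lower n : forall X Y : {set Xt}, #|X| = n -> #|Y| = n ->
  exists B, is_bij X Y B /\ \sum_(b in B) k b.1 b.2 = F X Y.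
Proof.
elim: n => [|n IH] X Y hX hY.
  move/eqP: hX; rewrite cards_eq0 => /eqP ->.
  move/eqP: hY; rewrite cards_eq0 => /eqP ->.
  exists set0; split.
    apply/and3P; split; first exact: sub0set.
      by apply/forallP => x; rewrite inE.
    by apply/forallP => x; rewrite inE.
  rewrite big_set0 /F big1 // => v _; by rewrite subX0 cards0 mulr0.
have /card_gt0P [x0 hx0] : (0 < #|X|)%N by rewrite hX.
have /card_gt0P [y0 hy0] : (0 < #|Y|)%N by rewrite hY.
have hP : (x0, y0) \in setX X Y by rewrite inE hx0 hy0.
case: (arg_maxnP (fun b : Xt * Xt => #|C b.1 b.2|) hP) => [[x y] hxy0 hmax0].
have hxy : (x, y) \in setX X Y := hxy0.
have hmax : forall b, b \in setX X Y -> (#|C b.1 b.2| <= #|C x y|)%N := hmax0.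
move: (hxy); rewrite inE /= => /andP [hx hy].
have hX' : #|X :\ x| = n by move: hX; rewrite (cardsD1 x X) hx add1n => -[].
have hY' : #|Y :\ y| = n by move: hY; rewrite (cardsD1 y Y) hy add1n => -[].
have [B' [hB' hs']] := IH _ _ hX' hY'.
case/and3P: (hB') => hsub' /forallP h1' /forallP h2'.
have nB' : (x, y) \notin B'.
  apply/negP => /(subsetP hsub'); rewrite !inE /= => /andP [/andP [] ].
  by rewrite eqxx.
exists ((x, y) |: B'); split.
  apply/and3P; split.
  - apply/subsetP => b; rewrite in_setU1 => /orP [/eqP -> //| hb].
    move/subsetP: hsub' => /(_ _ hb); rewrite !inE => /andP [/andP [_ ->] /andP [_ ->]].
    by [].
  - apply/forallP => x1; apply/implyP => hx1; apply/cards1P.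
    case: (eqVneq x1 x) => [->|hne].
      exists (x, y); apply/setP => b; rewrite !inE.
      case: (eqVneq b (x, y)) => [-> | hb] /=; first by rewrite eqxx.
      apply/negbTE/negP => /andP [hb' /eqP e].
      move/subsetP: hsub' => /(_ _ hb'); rewrite !inE e eqxx /=.
      by [].
    have hx1' : x1 \in X :\ x by rewrite !inE hne hx1.
    have /cards1P [z hz] := implyP (h1' x1) hx1'.
    exists z; rewrite -hz; apply/setP => b; rewrite !inE.
    case: (eqVneq b (x, y)) => [-> | hb] /=; last by [].
    by rewrite eq_sym (negbTE hne) !andbF.
  - apply/forallP => y1; apply/implyP => hy1; apply/cards1P.
    case: (eqVneq y1 y) => [->|hne].
      exists (x, y); apply/setP => b; rewrite !inE.
      case: (eqVneq b (x, y)) => [-> | hb] /=; first by rewrite eqxx.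
      apply/negbTE/negP => /andP [hb' /eqP e].
      move/subsetP: hsub' => /(_ _ hb'); rewrite !inE e eqxx /= andbF.
      by [].
    have hy1' : y1 \in Y :\ y by rewrite !inE hne hy1.
    have /cards1P [z hz] := implyP (h2' y1) hy1'.
    exists z; rewrite -hz; apply/setP => b; rewrite !inE.
    case: (eqVneq b (x, y)) => [-> | hb] /=; last by [].
    by rewrite eq_sym (negbTE hne) !andbF.
rewrite big_setU1 //= hs' k_C /F big_mkcond -big_split /=.
apply: eq_bigr => v _.
rewrite (subX_D1 X x v hx) (subX_D1 Y y v hy) /C inE.
case ax: (ancestor p v (f x)); case ay: (ancestor p v (f y)) => /=.
- have -> : minn (1 + #|subX p f (X :\ x) v|) (1 + #|subX p f (Y :\ y) v|)
           = (minn #|subX p f (X :\ x) v| #|subX p f (Y :\ y) v|).+1 by lia.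
  by rewrite -addn1 natrD mulrDr mulr1 addrC.
- have h0 : #|subX p f (Y :\ y) v| = 0%N.
    apply/eqP; rewrite cards_eq0; apply/eqP/setP => y'; rewrite /subX !inE.
    apply/negbTE/negP => /andP [/andP [_ hy'] hv].
    have := hmax (x, y'); rewrite inE hx hy' /= => /(_ isT).
    rewrite leqNgt /C.
    by rewrite (cross ax (negbT ay) hv).
  by rewrite h0 !minn0 add0r.
- have h0 : #|subX p f (X :\ x) v| = 0%N.
    apply/eqP; rewrite cards_eq0; apply/eqP/setP => x'; rewrite /subX !inE.
    apply/negbTE/negP => /andP [/andP [_ hx'] hv].
    have := hmax (x', y); rewrite inE hx' hy /= => /(_ isT).
    rewrite leqNgt /C.
    have e : forall a b, #|[set c | ancestor p c a && ancestor p c b]| =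
                          #|[set c | ancestor p c b && ancestor p c a]|.
      by move=> a b; apply: eq_card => c; rewrite !inE andbC.
    by rewrite e (e (f x')) (cross ay (negbT ax) hv).
  by rewrite h0 !min0n add0r.
- by rewrite !add0n add0r.
Qed.

End Tree.

Theorem theorem2 (R : realFieldType) (Xt : finType) (hne : (0 < #|Xt|)%N)
    (k : Xt -> Xt -> R) (hk : strong_kernel k)
    (V : finType) (p : V -> V) (r : V) (htree : rooted_tree p r)
    (f : Xt -> V) (hleaves : leaves_are p f)
    (w : V -> R) (hw : weight_ok p w) (hind : induces p w f k)
    (n : nat) (X Y : {set Xt}) (hX : #|X| = n) (hY : #|Y| = n) :
  KB k X Y = \sum_(v : V) omega p r w v * (minn #|subX p f X v| #|subX p f Y v|)%:R
  /\ \sum_(v : V) omega p r w v * (minn #|subX p f X v| #|subX p f Y v|)%:R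
     = Kcap (histogram p r w f X) (histogram p r w f Y).
Proof.
have hom := omega_ge0 _ _ r _ _ hw.
split.
  have [B0 [hB0 hs0]] := lower _ _ _ htree _ _ _ _ _ hind _ _ _ hX hY.
  rewrite /F in hs0.
  apply: le_anti; apply/andP; split.
    rewrite /KB; apply: (big_ind (fun z => z <= _)).
    - by apply: sumr_ge0 => v _; apply: mulr_ge0.
    - by move=> a b ha hb; rewrite ge_max ha hb.
    - by move=> B hB; apply: (upper _ _ _ htree _ _ hw _ _ _ hind _ _ _ hB).
  by rewrite /KB (bigD1 B0) //= -hs0 le_max lexx.
rewrite /Kcap; apply: eq_bigr => v _; rewrite !ffunE.
case: (leqP #|subX p f X v| #|subX p f Y v|) => h.
  rewrite min_l //; apply: ler_wpM2l => //.
  by rewrite ler_nat.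
rewrite min_r //; apply: ler_wpM2l => //.
by rewrite ler_nat ltnW.
Qed.
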